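(* The following are equivalent: (a) $\mathbf{0}\in\mathrm{conv}\,\chi$; (b) for every $\mathbf{x}_i\in\chi$ and every $\mathbf{x}\in\mathcal{D}_{i,\mathrm{DP}}$ one has $\|\mathbf{x}\|\ge\|\mathbf{x}_i\|$. Moreover, when $\mathbf{0}\in\mathrm{conv}\,\chi$, equality $\|\mathbf{x}\|=\|\mathbf{x}_i\|$ with $\mathbf{x}\in\mathcal{D}_{i,\mathrm{DP}}$ holds only for $\mathbf{x}=\mathbf{x}_i$.
   Context: A constellation is a finite set $\chi=\{\mathbf{x}_1,\dots,\mathbf{x}_M\}\subset\mathbb{R}^2$ of distinct points, $M\ge 3$, not all lying on one line. The Voronoi region of $\mathbf{x}_i$ is $\mathcal{D}_{i,\mathrm{ML}}=\{\mathbf{x}\in\mathbb{R}^2:\|\mathbf{x}-\mathbf{x}_i\|\le\|\mathbf{x}-\mathbf{x}_j\|\ \forall j\}$. Two distinct points $\mathbf{x}_i,\mathbf{x}_j$ are neighbors if their Voronoi regions share an edge (a common boundary segment or ray of positive length); $\mathcal{S}_i$ denotes the set of neighbors of $\mathbf{x}_i$. The distance preserving constructive interference region (DPCIR) of $\mathbf{x}_i$ is $\mathcal{D}_{i,\mathrm{DP}}=\{\mathbf{x}\in\mathbb{R}^2:(\mathbf{x}_i-\mathbf{x}_j)^T\mathbf{x}\ge (\mathbf{x}_i-\mathbf{x}_j)^T(\mathbf{x}_i+\mathbf{x}_j)/2+\|\mathbf{x}_i-\mathbf{x}_j\|^2/2\ \forall\mathbf{x}_j\in\mathcal{S}_i\}$,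 equivalently $\{\mathbf{x}:(\mathbf{x}_i-\mathbf{x}_j)^T(\mathbf{x}-\mathbf{x}_i)\ge 0\ \forall\mathbf{x}_j\in\mathcal{S}_i\}$. $\mathrm{conv}\,\chi$ is the convex hull of $\chi$. *)

(* Defs.v *)
From Stdlib Require Import Reals Lra.
Open Scope R_scope.

Definition pt := (R * R)%type.

Definition dot (u v : pt) : R := fst u * fst v + snd u * snd v.
Definition vsub (u v : pt) : pt := (fst u - fst v, snd u - snd v).
Definition vadd (u v : pt) : pt := (fst u + fst v, snd u + snd v).
Definition vscale (a : R) (u : pt) : pt := (a * fst u, a * snd u).
Definition norm (u : pt) : R := sqrt (dot u u).

Fixpoint rsum (f : nat -> R) (n : nat) : R :=
  match n with O => 0 | S m => rsum f m + f m end.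
Fixpoint vsum (f : nat -> pt) (n : nat) : pt :=
  match n with O => (0, 0) | S m => vadd (vsum f m) (f m) end.

Definition constellation (M : nat) (X : nat -> pt) : Prop :=
  (3 <= M)%nat /\
  (forall i j, (i < M)%nat -> (j < M)%nat -> X i = X j -> i = j) /\
  ~ (exists a b c : R, (a <> 0 \/ b <> 0) /\
       forall k, (k < M)%nat -> a * fst (X k) + b * snd (X k) = c).

Definition voronoi (M : nat) (X : nat -> pt) (i : nat) (x : pt) : Prop :=
  forall j, (j < M)%nat -> norm (vsub x (X i)) <= norm (vsub x (X j)).

Definition neighbors (M : nat) (X : nat -> pt) (i j : nat) : Prop :=
  X i <> X j /\
  exists a b : pt, a <> b /\
    forall t : R, 0 <= t <= 1 ->
      voronoi M X i (vadd (vscale (1 - t) a) (vscale t b)) /\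
      voronoi M X j (vadd (vscale (1 - t) a) (vscale t b)).

Definition dpcir (M : nat) (X : nat -> pt) (i : nat) (x : pt) : Prop :=
  forall j, (j < M)%nat -> neighbors M X i j ->
    dot (vsub (X i) (X j)) x >=
      dot (vsub (X i) (X j)) (vscale (1/2) (vadd (X i) (X j)))
      + norm (vsub (X i) (X j)) ^ 2 / 2.

Definition in_conv (M : nat) (X : nat -> pt) (y : pt) : Prop :=
  exists w : nat -> R,
    (forall k, (k < M)%nat -> 0 <= w k) /\
    rsum w M = 1 /\
    vsum (fun k => vscale (w k) (X k)) M = y.

(* Main.v *)
Require Import Defs.
From Stdlib Require Import Reals Lra Lia Psatz Classical.
Open Scope R_scope.

Lemma rsum_ext f g n : (forall k, (k < n)%nat -> f k = g k) -> rsum f n = rsum g n.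
Proof. induction n; simpl; intros H; auto. rewrite IHn by (intros; apply H; lia). rewrite H by lia. auto. Qed.

Lemma vsum_ext f g n : (forall k, (k < n)%nat -> f k = g k) -> vsum f n = vsum g n.
Proof. induction n; simpl; intros H; auto. rewrite IHn by (intros; apply H; lia). rewrite H by lia. auto. Qed.

Lemma rsum_plus f g n : rsum (fun k => f k + g k) n = rsum f n + rsum g n.
Proof. induction n; simpl; [lra| rewrite IHn; ring]. Qed.
Lemma rsum_scal c f n : rsum (fun k => c * f k) n = c * rsum f n.
Proof. induction n; simpl; [ring| rewrite IHn; ring]. Qed.
Lemma rsum_nonneg f n : (forall k, (k<n)%nat -> 0 <= f k) -> 0 <= rsum f n.
Proof. induction n; simpl; intros H; [lra|]. assert (0 <= f n) by (apply H; lia).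
  assert (0 <= rsum f n) by (apply IHn; intros; apply H; lia). lra. Qed.
Lemma rsum_zero n : rsum (fun _ => 0) n = 0.
Proof. induction n; simpl; [lra| rewrite IHn; ring]. Qed.
Lemma rsum_delta g k n : (k < n)%nat -> rsum (fun j => if Nat.eqb j k then g j else 0) n = g k.
Proof. induction n; intros; [lia|]. simpl. destruct (Nat.eq_dec k n).
  - subst. rewrite Nat.eqb_refl. rewrite (rsum_ext _ (fun _ => 0)). rewrite rsum_zero; ring.
    intros. destruct (Nat.eqb_spec k n); [lia|auto].
  - rewrite IHn by lia. destruct (Nat.eqb_spec n k); [lia|]. ring. Qed.
Lemma vsum_fst f n : fst (vsum f n) = rsum (fun k => fst (f k)) n.
Proof. induction n; simpl; auto. rewrite IHn; auto. Qed.
Lemma vsum_snd f n : snd (vsum f n) = rsum (fun k => snd (f k)) n.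
Proof. induction n; simpl; auto. rewrite IHn; auto. Qed.

Lemma argmin_ex (P : nat -> Prop) (f : nat -> R) n :
  (exists k, (k < n)%nat /\ P k) ->
  exists j, (j < n)%nat /\ P j /\ forall k, (k < n)%nat -> P k -> f j <= f k.
Proof.
  induction n; intros [k [Hk Pk]]; [lia|].
  destruct (classic (exists k, (k < n)%nat /\ P k)) as [Hex|Hno].
  - destruct (IHn Hex) as [j [Hj [Pj Hmin]]].
    destruct (classic (P n)) as [Pn|nPn].
    + destruct (Rle_dec (f j) (f n)).
      * exists j. repeat split; [lia|auto|]. intros k' Hk' Pk'.
        destruct (Nat.eq_dec k' n); [subst; auto | apply Hmin; [lia|auto]].
      * exists n. repeat split; [lia|auto|]. intros k' Hk' Pk'.
        destruct (Nat.eq_dec k' n); [subst; lra|]. specialize (Hmin k' ltac:(lia) Pk'). lra.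
    + exists j. repeat split; [lia|auto|]. intros k' Hk' Pk'.
      destruct (Nat.eq_dec k' n); [subst; tauto | apply Hmin; [lia|auto]].
  - assert (k = n). { destruct (Nat.eq_dec k n); auto. exfalso; apply Hno; exists k; split; [lia|auto]. }
    subst. exists n. repeat split; [lia|auto|]. intros k' Hk' Pk'.
    destruct (Nat.eq_dec k' n); [subst; lra|]. exfalso; apply Hno; exists k'; split; [lia|auto].
Qed.

Lemma pert1 n (a b : nat -> R) : (forall k, (k<n)%nat -> a k < 0) ->
  exists e, 0 < e /\ forall k, (k<n)%nat -> a k + e * b k < 0.
Proof.
  induction n; intros H.
  - exists 1; split; [lra|]; intros; lia.
  - destruct IHn as [e [He Hk]]; [intros; apply H; lia|].
    assert (Han : a n < 0) by (apply H; lia).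
    destruct (Rle_dec (b n) 0).
    + exists e; split; auto. intros k Hk'. destruct (Nat.eq_dec k n); [subst; nra| apply Hk; lia].
    + set (e' := Rmin e (- a n / (2 * b n))).
      assert (He1 : e' <= e) by apply Rmin_l.
      assert (He2 : e' <= - a n / (2 * b n)) by apply Rmin_r.
      assert (He3 : 0 < e') by (apply Rmin_glb_lt; auto; apply Rdiv_lt_0_compat; lra).
      exists e'; split; auto. intros k Hk'. destruct (Nat.eq_dec k n).
      * subst. assert (e' * b n <= (- a n / (2 * b n)) * b n) by (apply Rmult_le_compat_r; lra).
        assert ((- a n / (2 * b n)) * b n = - a n / 2) by (field; lra). lra.
      * specialize (Hk k ltac:(lia)). specialize (H k ltac:(lia)).
        destruct (Rle_dec (b k) 0); nra.
Qed.

Lemma pert2 n (a b : nat -> R) : (forall k, (k<n)%nat -> 0 <= a k /\ (a k = 0 -> b k <= 0)) ->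
  exists e, 0 < e /\ forall k, (k<n)%nat -> e * b k <= a k.
Proof.
  induction n; intros H.
  - exists 1; split; [lra|]; intros; lia.
  - destruct IHn as [e [He Hk]]; [intros; apply H; lia|].
    destruct (H n ltac:(lia)) as [Ha0 Ha1].
    destruct (Rle_dec (b n) 0).
    + exists e; split; auto. intros k Hk'. destruct (Nat.eq_dec k n); [subst; nra| apply Hk; lia].
    + assert (Hapos : 0 < a n) by (destruct Ha0; auto; exfalso; specialize (Ha1 (eq_sym H0)); lra).
      set (e' := Rmin e (a n / b n)).
      assert (He1 : e' <= e) by apply Rmin_l.
      assert (He2 : e' <= a n / b n) by apply Rmin_r.
      assert (He3 : 0 < e') by (apply Rmin_glb_lt; auto; apply Rdiv_lt_0_compat; lra).
      exists e'; split; auto. intros k Hk'. destruct (Nat.eq_dec k n).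
      * subst. assert (e' * b n <= (a n / b n) * b n) by (apply Rmult_le_compat_r; lra).
        assert ((a n / b n) * b n = a n) by (field; lra). lra.
      * specialize (Hk k ltac:(lia)). destruct (H k ltac:(lia)).
        destruct (Rle_dec (b k) 0); nra.
Qed.

Lemma conv3 m X k1 k2 k3 a1 a2 a3 : (k1 < m)%nat -> (k2 < m)%nat -> (k3 < m)%nat ->
  0 <= a1 -> 0 <= a2 -> 0 <= a3 -> 0 < a1 + a2 + a3 ->
  vadd (vadd (vscale a1 (X k1)) (vscale a2 (X k2))) (vscale a3 (X k3)) = (0,0) ->
  in_conv m X (0,0).
Proof.
  intros H1 H2 H3 Ha1 Ha2 Ha3 HS HV.
  set (S := a1 + a2 + a3).
  exists (fun j => / S * ((if Nat.eqb j k1 then a1 else 0) + (if Nat.eqb j k2 then a2 else 0)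
                  + (if Nat.eqb j k3 then a3 else 0))).
  assert (HSi : 0 < / S) by (apply Rinv_0_lt_compat; auto).
  split; [|split].
  - intros k _. apply Rmult_le_pos; [lra|].
    destruct (Nat.eqb k k1), (Nat.eqb k k2), (Nat.eqb k k3); lra.
  - rewrite rsum_scal, !rsum_plus.
    rewrite (rsum_delta (fun _ => a1)), (rsum_delta (fun _ => a2)), (rsum_delta (fun _ => a3)) by auto.
    unfold S; field; lra.
  - assert (E1 := f_equal fst HV); assert (E2 := f_equal snd HV); simpl in E1, E2.
    apply injective_projections; simpl; [rewrite vsum_fst | rewrite vsum_snd]; simpl.
    + rewrite (rsum_ext _ (fun j => / S * ((if Nat.eqb j k1 then a1 * fst (X j) else 0)
         + (if Nat.eqb j k2 then a2 * fst (X j) else 0) + (if Nat.eqb j k3 then a3 * fst (X j) else 0)))).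
      * rewrite rsum_scal, !rsum_plus.
        rewrite (rsum_delta (fun j => a1 * fst (X j))), (rsum_delta (fun j => a2 * fst (X j))),
          (rsum_delta (fun j => a3 * fst (X j))) by auto. rewrite E1. ring.
      * intros j _. destruct (Nat.eqb j k1), (Nat.eqb j k2), (Nat.eqb j k3); ring.
    + rewrite (rsum_ext _ (fun j => / S * ((if Nat.eqb j k1 then a1 * snd (X j) else 0)
         + (if Nat.eqb j k2 then a2 * snd (X j) else 0) + (if Nat.eqb j k3 then a3 * snd (X j) else 0)))).
      * rewrite rsum_scal, !rsum_plus.
        rewrite (rsum_delta (fun j => a1 * snd (X j))), (rsum_delta (fun j => a2 * snd (X j))),
          (rsum_delta (fun j => a3 * snd (X j))) by auto. rewrite E2. ring.
      * intros j _. destruct (Nat.eqb j k1), (Nat.eqb j k2), (Nat.eqb j k3); ring.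
Qed.

Lemma dnz d x : dot d x < 0 -> 0 < fst d * fst d + snd d * snd d.
Proof. destruct d as [d1 d2], x as [x1 x2]; unfold dot; simpl; intros H.
  destruct (Req_dec d1 0); destruct (Req_dec d2 0); subst; nra. Qed.

Lemma zero_perp d1 d2 v1 v2 : 0 < d1 * d1 + d2 * d2 -> d1 * v1 + d2 * v2 = 0 ->
  - d2 * v1 + d1 * v2 = 0 -> v1 = 0 /\ v2 = 0.
Proof. intros Hd H1 H2.
  assert ((d1*d1+d2*d2) * v1 = 0) by (replace ((d1*d1+d2*d2) * v1) with (d1*(d1*v1+d2*v2) - d2*(-d2*v1+d1*v2)) by ring; rewrite H1, H2; ring).
  assert ((d1*d1+d2*d2) * v2 = 0) by (replace ((d1*d1+d2*d2) * v2) with (d2*(d1*v1+d2*v2) + d1*(-d2*v1+d1*v2)) by ring; rewrite H1, H2; ring).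
  split; [apply (Rmult_eq_reg_l (d1*d1+d2*d2)) | apply (Rmult_eq_reg_l (d1*d1+d2*d2))]; lra. Qed.

Lemma farkas n X : in_conv n X (0,0) \/ exists d, forall k, (k<n)%nat -> dot d (X k) < 0.
Proof.
  induction n.
  - right; exists (0,0); intros; lia.
  - destruct IHn as [[w [Hw1 [Hw2 Hw3]]] | [d Hd]].
    + left. exists (fun k => if Nat.eqb k n then 0 else w k). split; [|split].
      * intros k Hk. destruct (Nat.eqb_spec k n); [lra| apply Hw1; lia].
      * simpl. rewrite Nat.eqb_refl. rewrite (rsum_ext _ w); [lra|].
        intros k Hk. destruct (Nat.eqb_spec k n); [lia|auto].
      * simpl. rewrite Nat.eqb_refl. rewrite (vsum_ext _ (fun k => vscale (w k) (X k))).
        -- rewrite Hw3. unfold vadd, vscale; simpl. f_equal; ring.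
        -- intros k Hk. destruct (Nat.eqb_spec k n); [lia|auto].
    + set (p := X n).
      destruct (Rlt_dec (dot d p) 0) as [Hlt|Hge].
      { right; exists d. intros k Hk. destruct (Nat.eq_dec k n); [subst; auto| apply Hd; lia]. }
      apply Rnot_lt_le in Hge.
      destruct (classic (p = (0,0))) as [Hp0|Hp0].
      { left. apply (conv3 (S n) X n n n 1 0 0); try lia; try lra.
        fold p. rewrite Hp0. unfold vadd, vscale; simpl. f_equal; ring. }
      set (e := (- snd d, fst d)).
      set (y := fun k => vsub (vscale (dot d p) (X k)) (vscale (dot d (X k)) p)).
      set (s := fun k => dot e (y k)).
      destruct (classic (exists k, (k < n)%nat /\ s k = 0)) as [[k [Hk Hs]]|HA].
      { left. apply (conv3 (S n) X k n n (dot d p) (- dot d (X k)) 0); try lia; try lra.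
        - specialize (Hd k Hk); lra.
        - specialize (Hd k Hk); lra.
        - assert (Hdd := dnz _ _ (Hd k Hk)).
          unfold s, e, y, p in *. destruct d as [d1 d2], (X k) as [x1 x2], (X n) as [p1 p2].
          unfold dot, vsub, vscale, vadd in *; simpl in *.
          destruct (zero_perp d1 d2 ((d1 * p1 + d2 * p2) * x1 - (d1 * x1 + d2 * x2) * p1)
             ((d1 * p1 + d2 * p2) * x2 - (d1 * x1 + d2 * x2) * p2) Hdd) as [E1 E2].
          + ring.
          + rewrite <- Hs. ring.
          + f_equal; lra. }
      destruct (classic (exists k l, (k < n)%nat /\ (l < n)%nat /\ s k > 0 /\ s l < 0)) as [[k [l [Hk [Hl [Hsk Hsl]]]]]|HB].
      { left. apply (conv3 (S n) X l k n (s k * dot d p) (- s l * dot d p)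
           (- s k * dot d (X l) + s l * dot d (X k))); try lia; try nra.
        - pose proof (Hd k Hk); pose proof (Hd l Hl). nra.
        - pose proof (Hd k Hk); pose proof (Hd l Hl). nra.
        - assert (Hdd := dnz _ _ (Hd k Hk)).
          unfold s, e, y, p in *. destruct d as [d1 d2], (X k) as [x1 x2], (X l) as [z1 z2], (X n) as [p1 p2].
          unfold dot, vsub, vscale, vadd in *; simpl in *.
          set (sk := - d2 * ((d1 * p1 + d2 * p2) * x1 - (d1 * x1 + d2 * x2) * p1) +
               d1 * ((d1 * p1 + d2 * p2) * x2 - (d1 * x1 + d2 * x2) * p2)) in *.
          set (sl := - d2 * ((d1 * p1 + d2 * p2) * z1 - (d1 * z1 + d2 * z2) * p1) +
               d1 * ((d1 * p1 + d2 * p2) * z2 - (d1 * z1 + d2 * z2) * p2)) in *.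
          destruct (zero_perp d1 d2
            (sk * (d1 * p1 + d2 * p2) * z1 + - sl * (d1 * p1 + d2 * p2) * x1 + (- sk * (d1 * z1 + d2 * z2) + sl * (d1 * x1 + d2 * x2)) * p1)
            (sk * (d1 * p1 + d2 * p2) * z2 + - sl * (d1 * p1 + d2 * p2) * x2 + (- sk * (d1 * z1 + d2 * z2) + sl * (d1 * x1 + d2 * x2)) * p2) Hdd) as [E1 E2].
          + ring.
          + unfold sk, sl; ring.
          + f_equal; lra. }
      (* all same sign *)
      assert (Hsign : exists f, forall k, (k < n)%nat -> dot f (y k) < 0).
      { destruct (classic (exists k, (k < n)%nat /\ s k > 0)) as [[k0 [Hk0 Hs0]]|HC].
        - exists (snd d, - fst d). intros k Hk.
          assert (s k <> 0) by (intro; apply HA; exists k; auto).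
          assert (~ s k < 0) by (intro; apply HB; exists k0, k; auto).
          assert (dot (snd d, - fst d) (y k) = - s k) by (unfold s, e, dot; simpl; ring). lra.
        - exists e. intros k Hk.
          assert (s k <> 0) by (intro; apply HA; exists k; auto).
          assert (~ s k > 0) by (intro; apply HC; exists k; auto).
          fold (s k). lra. }
      destruct Hsign as [f Hf].
      set (d0 := vsub (vscale (dot d p) f) (vscale (dot f p) d)).
      destruct (pert1 n (fun k => dot f (y k)) (fun k => - dot p (X k)) Hf) as [eps [Heps Hke]].
      right. exists (vsub d0 (vscale eps p)). intros k Hk.
      assert (Hpp : 0 < dot p p).
      { destruct p as [p1 p2]. unfold dot; simpl.
        destruct (Req_dec p1 0); destruct (Req_dec p2 0); subst; [exfalso; auto| nra..]. }
      destruct (Nat.eq_dec k n).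
      * subst k. fold p. assert (dot (vsub d0 (vscale eps p)) p = - eps * dot p p)
          by (unfold d0; destruct d, f, p; unfold dot, vsub, vscale; simpl; ring). nra.
      * specialize (Hke k ltac:(lia)). simpl in Hke.
        assert (dot (vsub d0 (vscale eps p)) (X k) = dot f (y k) + eps * - dot p (X k))
          by (unfold d0, y; destruct d, f, p, (X k); unfold dot, vsub, vscale; simpl; ring). lra.
Qed.

Definition gq (y b a : pt) : R := dot (vsub y b) (vsub y b) - dot (vsub y a) (vsub y a).

Lemma G1 a b d t : gq (vadd a (vscale t d)) b a = dot (vsub b a) (vsub b a) - 2 * t * dot (vsub b a) d.
Proof. destruct a, b, d; unfold gq, dot, vsub, vadd, vscale; simpl; ring. Qed.
Lemma G2 y b a s v : gq (vadd y (vscale s v)) b a = gq y b a - 2 * s * dot (vsub b a) v.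
Proof. destruct a, b, y, v; unfold gq, dot, vsub, vadd, vscale; simpl; ring. Qed.
Lemma dot_self_nonneg u : 0 <= dot u u.
Proof. destruct u; unfold dot; simpl; nra. Qed.
Lemma dot_zero u v : dot u u <= 0 -> dot u v = 0.
Proof. destruct u as [u1 u2], v; unfold dot; simpl; intros.
  assert (u1 = 0) by nra. assert (u2 = 0) by nra. subst; ring. Qed.
Lemma norm_le u v : dot u u <= dot v v -> norm u <= norm v.
Proof. intros; unfold norm; apply sqrt_le_1_alt; auto. Qed.

Lemma Lnv n d cj : dot n d <> 0 ->
  dot n (vadd (vscale (- cj) d) (snd d, - fst d)) = (dot n (snd d, - fst d) / dot n d - cj) * dot n d.
Proof. intros H. destruct n, d; unfold dot, vadd, vscale in *; simpl in *. field; auto. Qed.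

Lemma key M X i d : (i < M)%nat ->
  (forall j, (j < M)%nat -> neighbors M X i j -> dot (vsub (X i) (X j)) d >= 0) ->
  forall k, (k < M)%nat -> dot (vsub (X i) (X k)) d >= 0.
Proof.
  intros Hi Hn k Hk. apply Rnot_lt_ge; intro Hneg.
  set (nv := fun k => vsub (X k) (X i)).
  assert (Hex : exists k, (k < M)%nat /\ dot (nv k) d > 0).
  { exists k; split; auto. unfold nv; destruct (X k), (X i), d; unfold dot, vsub in *; simpl in *; lra. }
  set (tf := fun k => dot (nv k) (nv k) / (2 * dot (nv k) d)).
  destruct (argmin_ex (fun k => dot (nv k) d > 0) tf M Hex) as [j0 [Hj0 [Pj0 Hmin]]].
  set (ts := tf j0).
  set (ys := vadd (X i) (vscale ts d)).
  assert (Hts : 0 <= ts).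
  { unfold ts, tf. unfold Rdiv; apply Rmult_le_pos; [apply dot_self_nonneg|].
    left; apply Rinv_0_lt_compat; lra. }
  assert (HG : forall k, (k < M)%nat -> 0 <= gq ys (X k) (X i)).
  { intros k1 Hk1. unfold ys; rewrite G1. fold (nv k1).
    assert (Hnn := dot_self_nonneg (nv k1)).
    destruct (Rlt_dec 0 (dot (nv k1) d)) as [P|nP].
    - assert (Ht := Hmin k1 Hk1 P). fold ts in Ht.
      assert (tf k1 * (2 * dot (nv k1) d) = dot (nv k1) (nv k1)) by (unfold tf; field; lra).
      nra.
    - nra. }
  assert (HQ0 : gq ys (X j0) (X i) = 0).
  { unfold ys; rewrite G1. fold (nv j0). unfold ts, tf. field. lra. }
  set (wp := (snd d, - fst d)).
  set (c := fun k => dot (nv k) wp / dot (nv k) d).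
  destruct (argmin_ex (fun k => dot (nv k) d > 0 /\ gq ys (X k) (X i) = 0) (fun k => - c k) M)
    as [j [Hj [[Pj Qj] Hmax]]].
  { exists j0; auto. }
  set (v := vadd (vscale (- c j) d) wp).
  assert (Hnv : forall k, dot (nv k) d <> 0 -> dot (nv k) v = (c k - c j) * dot (nv k) d).
  { intros k1 H1. unfold v, c, wp. apply Lnv; auto. }
  assert (HV0 : dot (nv j) v = 0) by (rewrite Hnv; lra).
  assert (HVz : forall k, (k < M)%nat -> gq ys (X k) (X i) = 0 -> dot (nv k) v <= 0).
  { intros k1 Hk1 Hg. destruct (Rlt_dec 0 (dot (nv k1) d)) as [P|nP].
    - assert (Hm := Hmax k1 Hk1 (conj P Hg)). rewrite Hnv by lra. nra.
    - unfold ys in Hg; rewrite G1 in Hg; fold (nv k1) in Hg.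
      rewrite dot_zero; [lra|]. nra. }
  destruct (pert2 M (fun k => gq ys (X k) (X i)) (fun k => 2 * dot (nv k) v)) as [eps [Heps He]].
  { intros k1 Hk1. split; [apply HG; auto|]. intro H0; specialize (HVz k1 Hk1 H0); lra. }
  assert (Hdd : 0 < dot d d).
  { destruct (nv j0), d; unfold dot in *; simpl in *.
    destruct (Req_dec r1 0); destruct (Req_dec r2 0); subst; nra. }
  assert (Hvw : dot v wp = dot d d) by (unfold v, wp; destruct d; unfold dot, vadd, vscale; simpl; ring).
  assert (Hnb : neighbors M X i j).
  { split.
    - intro E. unfold nv in Pj. rewrite E in Pj. destruct (X j), d; unfold dot, vsub in Pj; simpl in Pj. nra.
    - exists ys, (vadd ys (vscale eps v)). split.
      + intro E. assert (E1 := f_equal fst E); assert (E2 := f_equal snd E).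
        destruct ys as [y1 y2], v as [v1 v2]; unfold vadd, vscale in E1, E2; simpl in E1, E2.
        assert (v1 = 0) by (apply (Rmult_eq_reg_l eps); lra).
        assert (v2 = 0) by (apply (Rmult_eq_reg_l eps); lra).
        rewrite H, H0 in Hvw. assert (dot (0,0) wp = 0) by (unfold dot; simpl; ring). lra.
      + intros t Ht.
        replace (vadd (vscale (1 - t) ys) (vscale t (vadd ys (vscale eps v))))
          with (vadd ys (vscale (t * eps) v))
          by (destruct ys, v; unfold vadd, vscale; simpl; f_equal; ring).
        assert (Hz : forall k, (k < M)%nat -> 0 <= gq (vadd ys (vscale (t * eps) v)) (X k) (X i)).
        { intros k1 Hk1. rewrite G2. fold (nv k1). specialize (He k1 Hk1). simpl in He.
          assert (HGk := HG k1 Hk1).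
          destruct (Rle_dec (dot (nv k1) v) 0); nra. }
        assert (Hzj : gq (vadd ys (vscale (t * eps) v)) (X j) (X i) = 0).
        { rewrite G2. fold (nv j). rewrite Qj, HV0. ring. }
        split; intros k1 Hk1; apply norm_le; specialize (Hz k1 Hk1); unfold gq in *; lra. }
  specialize (Hn j Hj Hnb). unfold nv in Pj.
  destruct (X i), (X j), d; unfold dot, vsub in *; simpl in *; lra.
Qed.

Lemma norm_sq u : norm u ^ 2 = dot u u.
Proof. unfold norm. simpl. rewrite Rmult_1_r. apply sqrt_sqrt. apply dot_self_nonneg. Qed.

Lemma dp_iff a b x : dot (vsub a b) x >= dot (vsub a b) (vscale (1/2) (vadd a b)) + norm (vsub a b) ^ 2 / 2
  <-> dot (vsub a b) (vsub x a) >= 0.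
Proof. rewrite norm_sq. destruct a, b, x; unfold dot, vsub, vscale, vadd; simpl; split; intros; nra. Qed.

Lemma conv_key M X i d : in_conv M X (0,0) -> (forall k, (k < M)%nat -> dot (vsub (X i) (X k)) d >= 0) ->
  dot (X i) d >= 0.
Proof.
  intros [w [Hw1 [Hw2 Hw3]]] H.
  assert (E1 := f_equal fst Hw3); assert (E2 := f_equal snd Hw3).
  rewrite vsum_fst in E1; rewrite vsum_snd in E2; simpl in E1, E2.
  assert (Hs : 0 <= rsum (fun k => w k * dot (vsub (X i) (X k)) d) M).
  { apply rsum_nonneg. intros k Hk. specialize (H k Hk). specialize (Hw1 k Hk). nra. }
  rewrite (rsum_ext _ (fun k => dot (X i) d * w k + ((- fst d) * (w k * fst (X k)) + (- snd d) * (w k * snd (X k))))) in Hs.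
  - rewrite rsum_plus, rsum_plus, !rsum_scal, E1, E2, Hw2 in Hs. lra.
  - intros k _. destruct (X i), (X k), d; unfold dot, vsub; simpl; ring.
Qed.

Theorem lemma3 (M : nat) (X : nat -> pt) (HX : constellation M X) :
  (in_conv M X (0, 0) <->
     (forall i x, (i < M)%nat -> dpcir M X i x -> norm x >= norm (X i))) /\
  (in_conv M X (0, 0) ->
     forall i x, (i < M)%nat -> dpcir M X i x -> norm x = norm (X i) -> x = X i).
Proof.
  assert (AB : in_conv M X (0,0) -> forall i x, (i < M)%nat -> dpcir M X i x ->
     dot (X i) (vsub x (X i)) >= 0).
  { intros Hc i x Hi Hdp. apply conv_key with M; auto.
    apply key; auto. intros j Hj Hnb. apply dp_iff. apply Hdp; auto. }
  split; [split|].
  - intros Hc i x Hi Hdp. specialize (AB Hc i x Hi Hdp).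
    apply Rle_ge, norm_le. destruct x as [x1 x2], (X i) as [a1 a2]; unfold dot, vsub in *; simpl in *.
    pose proof (Rle_0_sqr (x1-a1)); pose proof (Rle_0_sqr (x2-a2)); unfold Rsqr in *. lra.
  - intros H. destruct (farkas M X) as [Hc|[d Hd]]; auto. exfalso.
    destruct HX as [HM _].
    destruct (argmin_ex (fun _ => True) (fun k => - dot d (X k)) M) as [i [Hi [_ Hmax]]].
    { exists 0%nat; split; [lia|auto]. }
    assert (Hdi := Hd i Hi).
    assert (Hdd : 0 < dot d d) by (pose proof (dnz _ _ Hdi); unfold dot; auto).
    set (t := - dot d (X i) / dot d d).
    assert (Ht : 0 < t) by (unfold t; apply Rdiv_lt_0_compat; lra).
    assert (Htd : t * dot d d = - dot d (X i)) by (unfold t; field; lra).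
    set (x := vadd (X i) (vscale t d)).
    assert (Hdp : dpcir M X i x).
    { intros j Hj _. apply dp_iff. specialize (Hmax j Hj I).
      assert (dot (vsub (X i) (X j)) (vsub x (X i)) = t * (dot d (X i) - dot d (X j)))
        by (unfold x; destruct (X i), (X j), d; unfold dot, vsub, vadd, vscale; simpl; ring).
      nra. }
    specialize (H i x Hi Hdp).
    assert (Hxx : dot x x = dot (X i) (X i) + 2 * t * dot d (X i) + t * (t * dot d d))
      by (unfold x; destruct (X i), d; unfold dot, vadd, vscale; simpl; ring).
    assert (dot x x >= dot (X i) (X i)).
    { rewrite <- !norm_sq. apply Rle_ge. apply pow_incr. split; [unfold norm; apply sqrt_pos| lra]. }
    rewrite Htd in Hxx. nra.
  - intros Hc i x Hi Hdp Heq. specialize (AB Hc i x Hi Hdp).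
    assert (dot x x = dot (X i) (X i)) by (rewrite <- !norm_sq; rewrite Heq; auto).
    destruct x as [x1 x2], (X i) as [a1 a2]; unfold dot, vsub in *; simpl in *.
    pose proof (Rle_0_sqr (x1-a1)); pose proof (Rle_0_sqr (x2-a2)); unfold Rsqr in *.
    assert (E1 : (x1-a1)*(x1-a1) = 0) by lra. assert (E2 : (x2-a2)*(x2-a2) = 0) by lra.
    apply Rmult_integral in E1; apply Rmult_integral in E2.
    f_equal; lra.
Qed.
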